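(* There exist positive integers $n<m$ and a distribution $F$ such that the TWDPP mechanism is asymptotically stable with respect to $F^n$, but the UDPP mechanism is unstable (not asymptotically stable) with respect to $F^n$.
   Context: Dynamic posted-price setting: at each time step a block with $m$ slots is produced; $n$ bidders arrive with values drawn i.i.d. from $F$ (joint distribution $F^n$), each participating once and bidding truthfully. Given posted price $q>0$, $M(q)=\{i:b_i\ge q\}$. Both mechanisms use the random maximal allocation: $B$ is a uniformly random subset of $M(q)$ of size $\min\{m,|M(q)|\}$; each $i\in B$ gets a slot and pays $q$; the next price is $T(q,B)$. UDPP: $T_U(q,B)=\alpha\frac{|B|}{m}(1+\delta)q+(1-\alpha)q$. TWDPP: $T_{TW}(q,B)=\alpha\frac1m\sum_{i\in B}\min\{b_i,(1+\delta)q\}+(1-\alpha)q$ if $|B|<m$, and $\alpha(1+\delta)q+(1-\alpha)q$ if $|B|=m$. Here $\alpha\in(0,1)$, $\delta\in(0,\infty)$. Let $E_T(q)=\mathbb{E}[T(q,B)]$ over values and allocation; an equilibrium price is $z$ with $E_T(z)=z$. The mechanism is asymptotically stable with respect to $F^n$ if for every $q_0>0$ the sequence $q_{k+1}=E_T(q_k)$ converges to an equilibrium price; otherwise it is unstable. *)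

(* Defs.v *)
From HB Require Import structures.
From mathcomp Require Import all_boot all_order all_algebra.
From mathcomp Require Import all_classical all_reals all_analysis.
Set Implicit Arguments. Unset Strict Implicit. Unset Printing Implicit Defensive.
Import Order.TTheory GRing.Theory Num.Theory.
Import numFieldNormedType.Exports.
Local Open Scope classical_set_scope.
Local Open Scope ring_scope.

Section Mechanisms.
Variable R : realType.

(* Expectation of a (nonnegative) function of n i.i.d. values with law F,
   i.e. the integral w.r.t. the product measure F^n, written as an iterated
   integral (one coordinate at a time). *)
Fixpoint iidE (F : probability R R) (n : nat) : (n.-tuple R -> \bar R) -> \bar R :=
  match n return (n.-tuple R -> \bar R) -> \bar R with
  | 0 => fun g => g [tuple]
  | n'.+1 => fun g => (\int[F]_x iidE F (fun t : n'.-tuple R => g [tuple of x :: t]))%E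
  end.

Definition Mset (n : nat) (q : R) (b : n.-tuple R) : {set 'I_n} :=
  [set i | q <= tnth b i].

(* possible outcomes of the random maximal allocation: subsets of M(q)
   of size min(m, |M(q)|); B is drawn uniformly among them *)
Definition allocs (n m : nat) (q : R) (b : n.-tuple R) : {set {set 'I_n}} :=
  [set B : {set 'I_n} | (B \subset Mset q b) && (#|B| == minn m #|Mset q b|)].

Definition allocE (n m : nat) (T : R -> n.-tuple R -> {set 'I_n} -> R)
  (q : R) (b : n.-tuple R) : R :=
  (\sum_(B in allocs m q b) T q b B) / (#|allocs m q b|)%:R.

Definition ET (F : probability R R) (n m : nat)
  (T : R -> n.-tuple R -> {set 'I_n} -> R) (q : R) : R :=
  fine (iidE F (fun b => (allocE m T q b)%:E)).

Definition T_UDPP (n m : nat) (alpha delta : R)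
  (q : R) (b : n.-tuple R) (B : {set 'I_n}) : R :=
  alpha * ((#|B|)%:R / m%:R) * (1 + delta) * q + (1 - alpha) * q.

Definition T_TWDPP (n m : nat) (alpha delta : R)
  (q : R) (b : n.-tuple R) (B : {set 'I_n}) : R :=
  if (#|B| < m)%N then
    alpha * (1 / m%:R) * (\sum_(i in B) Num.min (tnth b i) ((1 + delta) * q))
      + (1 - alpha) * q
  else alpha * (1 + delta) * q + (1 - alpha) * q.

Definition equilibrium_price (F : probability R R) (n m : nat)
  (T : R -> n.-tuple R -> {set 'I_n} -> R) (z : R) : Prop :=
  0 < z /\ ET F m T z = z.

Definition asymptotically_stable (F : probability R R) (n m : nat)
  (T : R -> n.-tuple R -> {set 'I_n} -> R) : Prop :=
  forall q0 : R, 0 < q0 ->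
    exists z : R, equilibrium_price F m T z /\
      (fun k : nat => iter k (ET F m T) q0) @ \oo --> z.

End Mechanisms.

(* Main.v *)
Require Import Defs.
From HB Require Import structures.
From mathcomp Require Import all_boot all_order all_algebra.
From mathcomp Require Import all_classical all_reals all_analysis.
From mathcomp Require Import measurable_realfun.
From mathcomp Require Import lra ring.
Import Order.TTheory GRing.Theory Num.Theory.
Import numFieldNormedType.Exports.
Import HBNNSimple.
Local Open Scope classical_set_scope.
Local Open Scope ring_scope.

Section Dirac.
Variable R : realType.
Local Open Scope ereal_scope.

Lemma sint_dirac (a : R) (h : {nnsfun R >-> R}) :
  sintegral \d_a h = (h a)%:E.
Proof.
rewrite -integralT_nnsfun integral_dirac //=.
  by rewrite /dirac indicE in_setT mul1e.
by apply/measurable_EFinP; exact: measurable_funPT.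
Qed.

Lemma int_dirac_ge0 (a : R) (p : R -> \bar R) (r : R) :
  (forall x, 0 <= p x) -> p a = r%:E ->
  \int[\d_a]_x p x = r%:E.
Proof.
move=> p0 par.
rewrite ge0_integralTE //.
apply/eqP; rewrite eq_le; apply/andP; split.
- apply: ge_ereal_sup => _ [h hp <-].
  rewrite sint_dirac -par; exact: hp.
- have r0 : (0 <= r)%R by rewrite -lee_fin -par.
  pose h := scale_nnsfun (indic_nnsfun R (measurable_set1 a)) r0.
  have -> : r%:E = sintegral \d_a h.
    by rewrite sint_dirac /= mindicE mem_set //= mulr1.
  refine (@ereal_sup_ubound _ _ (sintegral \d_a h) _).
  exists h => //.
  move=> x /=; rewrite mindicE; have [->|xa] := eqVneq x a.
    by rewrite mem_set //= mulr1 -par.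
  by rewrite memNset //= ?mulr0 //; move=> /= xa'; rewrite xa' eqxx in xa.
Qed.

Lemma int_dirac (a : R) (f : R -> R) :
  \int[\d_a]_x (f x)%:E = (f a)%:E.
Proof.
rewrite integralE.
rewrite (@int_dirac_ge0 a _ (Num.max (f a) 0 : R)%R); last 2 first.
- by move=> x; exact: funepos_ge0.
- by rewrite funeposE -EFin_max.
rewrite (@int_dirac_ge0 a _ (Num.max (- f a) 0 : R)%R); last 2 first.
- by move=> x; exact: funeneg_ge0.
- by rewrite funenegE -EFin_max.
rewrite -EFinD; congr EFin.
move: (f a) => y.
rewrite /Num.max; case: ifP => h1; case: ifP => h2 //; try lra.
Qed.

Lemma iidE_dirac n (a : R) (g : n.-tuple R -> R) :
  iidE (\d_a : probability R R) (fun b => (g b)%:E) = (g (nseq_tuple n a))%:E.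
Proof.
elim: n g => [|n IH] g /=.
  by congr (g _ )%:E; apply: val_inj.
under eq_integral => x _ do rewrite (IH (fun t => g [tuple of x :: t])).
rewrite (int_dirac a (fun x => g [tuple of x :: nseq_tuple n a])).
by congr (g _ )%:E; apply: val_inj.
Qed.
End Dirac.

Section Comp.
Variable R : realType.

Lemma allocs_eq n m (q : R) (b : n.-tuple R) : (n < m)%N ->
  allocs m q b = [set Mset q b]%SET.
Proof.
move=> nm; apply/setP => B; rewrite !inE.
have -> : minn m #|Mset q b| = #|Mset q b|.
  apply/minn_idPr; apply: ltnW; apply: leq_ltn_trans nm.
  by rewrite -[X in (_ <= X)%N]card_ord max_card.
rewrite eqEcard; case sub: (B \subset Mset q b) => //=.
by rewrite eqn_leq (subset_leq_card sub).
Qed.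

Lemma allocE_eq n m T (q : R) (b : n.-tuple R) : (n < m)%N ->
  allocE m T q b = T q b (Mset q b).
Proof.
by move=> nm; rewrite /allocE allocs_eq // big_set1 cards1 divr1.
Qed.

Lemma ET_dirac n m T (q a : R) : (n < m)%N ->
  ET (\d_a : probability R R) m T q = T q (nseq_tuple n a) (Mset q (nseq_tuple n a)).
Proof.
move=> nm; rewrite /ET (@iidE_dirac R n a (fun b => allocE m T q b)) /= allocE_eq //.
Qed.

Lemma Mset_ones n (q a : R) :
  Mset q (nseq_tuple n a) = if q <= a then [set: 'I_n]%SET else @finset.set0 _.
Proof.
apply/setP => i; rewrite !inE tnth_nseq.
by case: ifP; rewrite ?inE.
Qed.


Lemma ET_TW n m (al de q : R) : (n < m)%N ->
  ET (\d_(1:R) : probability R R) m (@T_TWDPP R n m al de) q =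
  if q <= 1 then al * (n%:R / m%:R) * Num.min 1 ((1 + de) * q) + (1 - al) * q
  else (1 - al) * q.
Proof.
move=> nm; rewrite ET_dirac // Mset_ones /T_TWDPP; case h: (q <= 1).
  rewrite cardsT card_ord nm.
  under eq_bigr => i _ do rewrite tnth_nseq.
  rewrite sumr_const cardsT card_ord -mulr_natr; ring.
rewrite cards0 (leq_ltn_trans (leq0n n) nm) big_set0 mulr0 add0r //.
Qed.

Lemma ET_U n m (al de q : R) : (n < m)%N ->
  ET (\d_(1:R) : probability R R) m (@T_UDPP R n m al de) q =
  if q <= 1 then al * (n%:R / m%:R) * (1 + de) * q + (1 - al) * q
  else (1 - al) * q.
Proof.
move=> nm; rewrite ET_dirac // Mset_ones /T_UDPP; case h: (q <= 1).
  by rewrite cardsT card_ord.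
by rewrite cards0 mul0r mulr0 !mul0r add0r.
Qed.

End Comp.

Section Dyn.
Variable R : realType.

Lemma geo1 {r eps : R} : 0 < r -> r < 1 -> 0 < eps -> exists k : nat, r ^+ k < eps.
Proof.
move=> r0 r1 e0.
have hr : `|r| < 1 by rewrite ger0_norm // ltW.
have := cvgr_lt 0 (cvg_expr hr) eps e0.
by case=> N _ HN; exists N; apply: HN => /=.
Qed.

Lemma bern (j : nat) (c : R) : 1 <= c -> 1 + j%:R * (c - 1) <= c ^+ j.
Proof.
move=> c1; elim: j => [|j IH]; first by rewrite mul0r addr0 expr0.
rewrite exprS -natr1.
have h : 0 <= j%:R :> R by [].
have e1 : c * (1 + j%:R * (c - 1)) <= c * c ^+ j by rewrite ler_wpM2l // (le_trans ler01 c1).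
have e2 : 0 <= j%:R * ((c - 1) * (c - 1)) by rewrite mulr_ge0 // mulr_ge0 // subr_ge0.
nra.
Qed.

Lemma geo2 (c M : R) : 1 < c -> exists j : nat, M < c ^+ j.
Proof.
move=> c1.
set j := (Num.truncn (`|M| / (c - 1))).+1.
exists j.
have h1 := truncnS_gt (`|M| / (c - 1)).
have h2 := bern j c (ltW c1).
have h3 : `|M| < j%:R * (c - 1).
  by rewrite -ltr_pdivrMr ?subr_gt0.
have h4 := ler_norm M.
lra.
Qed.


Lemma stab (g : R -> R) (r z a c q0 : R) :
  0 < r -> r < 1 -> 0 < a -> a <= z -> z <= 1 -> 1 < c -> c * a <= 1 ->
  (forall q, 1 < q -> g q = r * q) ->
  (forall q, a <= q -> q <= 1 -> g q = (1 - r) * z + r * q) ->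
  (forall q, 0 < q -> q < a -> g q = c * q) ->
  0 < q0 ->
  (fun k : nat => iter k g q0) @ \oo --> z.
Proof.
move=> r0 r1 a0 az z1 c1 ca H1 H2 H3 q00.
set u := fun k : nat => iter k g q0.
have uS k : u k.+1 = g (u k) by [].
have gpos q : 0 < q -> 0 < g q.
  move=> q0'; have [qa|qa] := ltP 1 q.
    by rewrite H1 // mulr_gt0.
  have [qa'|qa'] := leP a q.
    have z0 : 0 <= z by apply: le_trans az; apply: ltW.
    rewrite H2 //; have : 0 <= (1 - r) * z by rewrite mulr_ge0 // subr_ge0 ltW.
    by have := mulr_gt0 r0 q0'; lra.
  by rewrite H3 // mulr_gt0 // (lt_trans ltr01).
have upos k : 0 < u k by elim: k => [|k IH] //; rewrite uS gpos.
have gle1 q : 0 < q -> q <= 1 -> g q <= 1.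
  move=> q0' q1; have [qa'|qa'] := leP a q.
    rewrite H2 //.
    have e1 : (1 - r) * z <= (1 - r) by rewrite ler_piMr // subr_ge0 ltW.
    have e2 : r * q <= r by rewrite ler_piMr // ltW.
    lra.
  rewrite H3 //; apply: le_trans ca; rewrite ler_wpM2l // ?ltW //.
    exact: lt_trans c1.
have [k uk1] : exists k, u k <= 1.
  apply/not_existsP => hk.
  have hgt k : 1 < u k by rewrite ltNge; apply/negP; exact: hk.
  have ue k : u k = r ^+ k * q0.
    elim: k => [|k IH]; first by rewrite expr0 mul1r.
    by rewrite uS H1 ?hgt // IH exprS mulrA.
  have qi : 0 < q0^-1 by rewrite invr_gt0.
  have [j hj] := geo1 r0 r1 qi.
  have := hgt j; rewrite ue.
  move: hj; rewrite -div1r ltr_pdivlMr //; lra.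
have ule1 j : u (j + k)%N <= 1.
  elim: j => [|j IH] //.
  by rewrite addSn uS gle1.
have [j uja] : exists j, a <= u (j + k)%N.
  apply/not_existsP => hj.
  have hlt j : u (j + k)%N < a by rewrite ltNge; apply/negP; exact: hj.
  have ue j : u (j + k)%N = c ^+ j * u k.
    elim: j => [|j IH]; first by rewrite expr0 mul1r.
    by rewrite addSn uS H3 ?hlt // IH exprS mulrA.
  have [j' hj'] := geo2 c (a / u k) c1.
  have := hlt j'; rewrite ue.
  move: hj'; rewrite ltr_pdivrMr //; lra.
set K := (j + k)%N.
have inv i : a <= u (i + K)%N <= 1.
  elim: i => [|i IH]; first by rewrite add0n uja /= ule1.
  case/andP: IH => h1 h2.
  rewrite addSn uS H2 //.
  have e1 : r * a <= r * u (i + K)%N by rewrite ler_wpM2l // ltW.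
  have e2 : r * u (i + K)%N <= r by rewrite ler_piMr // ltW.
  have e3 : (1 - r) * a <= (1 - r) * z by rewrite ler_wpM2l // subr_ge0 ltW.
  have e4 : (1 - r) * z <= (1 - r) by rewrite ler_piMr // subr_ge0 ltW.
  apply/andP; split; lra.
have ue i : u (i + K)%N = z + r ^+ i * (u K - z).
  elim: i => [|i IH]; first by rewrite expr0 mul1r add0n addrC subrK.
  case/andP: (inv i) => h1 h2.
  rewrite addSn uS H2 // IH exprS; ring.
rewrite -(cvg_shiftn K).
have -> : [sequence u (n + K)%N]_n = (fun i => z + r ^+ i * (u K - z)).
  by apply/funext => i /=; rewrite ue.
have hr : `|r| < 1 by rewrite ger0_norm // ltW.
have := cvgD (cvg_cst z) (@cvgMr_tmp _ _ _ _ _ _ (u K - z) (cvg_expr hr)).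
by rewrite mul0r addr0 => h; exact: h.
Qed.

End Dyn.

Theorem mainTheorem6 (R : realType) (alpha delta : R) :
  0 < alpha -> alpha < 1 -> 0 < delta ->
  exists (n m : nat) (F : probability R R),
    (0 < n)%N /\ (n < m)%N /\
    @asymptotically_stable R F n m (@T_TWDPP R n m alpha delta) /\
    ~ @asymptotically_stable R F n m (@T_UDPP R n m alpha delta).
Proof.
move=> a0 a1 d0.
set n := (Num.truncn (delta^-1)).+1.
exists n, n.+1, (\d_(1:R) : probability R R).
have nm : (n < n.+1)%N by [].
have hn : 1 < n%:R * delta.
  have h := truncnS_gt (delta^-1).
  by move: h; rewrite -/n -div1r ltr_pdivrMr.
set N := n%:R : R.
have N0 : 0 < N by rewrite /N ltr0n.
have NS : n.+1%:R = N + 1 :> R by rewrite -natr1.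
set z := N / n.+1%:R.
have N1 : N + 1 != 0 by rewrite gt_eqF //; lra.
have zE : z * (N + 1) = N by rewrite /z NS divfK.
have z0 : 0 < z by rewrite /z divr_gt0 // ltr0n.
have z1 : z <= 1.
  have : z * (N + 1) <= 1 * (N + 1) by rewrite zE; lra.
  by rewrite ler_pM2r //; lra.
have zd : 1 < z * (1 + delta).
  have e : z * (1 + delta) * (N + 1) = N * (1 + delta) by rewrite mulrAC zE.
  have : 1 * (N + 1) < z * (1 + delta) * (N + 1) by rewrite e; lra.
  by rewrite ltr_pM2r //; lra.
split; first by [].
split; first by [].
have dpos : 0 < 1 + delta by lra.
set a := (1 + delta)^-1.
have aE : a * (1 + delta) = 1 by rewrite /a mulVf //; lra.
have a0' : 0 < a by rewrite /a invr_gt0.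
have az : a <= z by rewrite /a -div1r ler_pdivrMr //; lra.
split.
- move=> q0 q00; exists z; split.
    split => //.
    rewrite ET_TW // -/N -/z z1.
    have -> : Num.min 1 ((1 + delta) * z) = 1.
      by rewrite /Num.min; case: ifP => //; lra.
    ring.
  apply: (@stab R _ (1 - alpha) z a (1 - alpha + alpha * (1 + delta) * z)) => //; try lra.
  + have : 0 < alpha * (z * (1 + delta) - 1) by rewrite mulr_gt0 // subr_gt0.
    lra.
  + have e : (1 - alpha + alpha * (1 + delta) * z) * a = (1 - alpha) * a + alpha * z * (a * (1 + delta)) by ring.
    rewrite e aE mulr1.
    have : (1 - alpha) * a <= (1 - alpha) * 1 by rewrite ler_wpM2l //; lra.
    have : alpha * z <= alpha by rewrite ler_piMr // ltW.
    lra.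
  + move=> q q1; rewrite ET_TW //.
    have -> : (q <= 1) = false by apply/negbTE; rewrite -ltNge.
    by [].
  + move=> q qa q1; rewrite ET_TW // -/N -/z q1.
    have h : 1 <= (1 + delta) * q by move: qa; rewrite /a -div1r ler_pdivrMr // mulrC.
    have -> : Num.min 1 ((1 + delta) * q) = 1.
      by rewrite /Num.min; case: ifP => //; lra.
    ring.
  + move=> q q0' qa; rewrite ET_TW // -/N -/z.
    have h : (1 + delta) * q < 1 by move: qa; rewrite /a -div1r ltr_pdivlMr // mulrC.
    have -> : (q <= 1) = true by apply/idP; lra.
    have -> : Num.min 1 ((1 + delta) * q) = (1 + delta) * q.
      by rewrite /Num.min; case: ifP => //; lra.
    ring.
- move=> H; have [w [[w0 Ew] _]] := H 1 ltr01.
  move: Ew; rewrite ET_U // -/N -/z; case: ifP => _ Ew.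
    have : 0 < alpha * w * (z * (1 + delta) - 1) by rewrite mulr_gt0 ?mulr_gt0 // subr_gt0.
    have e : alpha * z * (1 + delta) * w + (1 - alpha) * w - w = alpha * w * (z * (1 + delta) - 1) by ring.
    lra.
  have : 0 < alpha * w by rewrite mulr_gt0.
  lra.
Qed.
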